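(* Let $n$ be even and $f:\mathbb{F}_{2^n}\to\mathbb{F}_{2^n}$ be a map with exactly $t$ bent component functions. Then $N(f)\geq t+2^n$ and \[|\mathrm{Im}(f)|\leq 2^n-\tfrac12\left(\sqrt{4t+1}-1\right).\]
   Context: $\mathrm{Tr}$ is the absolute trace and $W_f(b,a)=\sum_{x}(-1)^{\mathrm{Tr}(bf(x)+ax)}$. The component functions of $f$ are $x\mapsto\mathrm{Tr}(\lambda f(x))$, $\lambda\neq0$; such a component is bent if $|W_f(\lambda,a)|=2^{n/2}$ for all $a\in\mathbb{F}_{2^n}$. $N(f)$ is the number of pairs $(x,y)$ with $f(x)=f(y)$. *)

(* Defs.v *)
From HB Require Import structures.
From mathcomp Require Import all_boot all_order all_algebra all_field.
Set Implicit Arguments. Unset Strict Implicit. Unset Printing Implicit Defensive.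
Import Order.TTheory GRing.Theory Num.Theory.
Local Open Scope ring_scope.

Definition abs_trace (F : finFieldType) (n : nat) (x : F) : F :=
  \sum_(i < n) x ^+ (2 ^ i).

(* (-1)^{Tr(y)} as an integer (Tr(y) is 0 or 1 in F_2). *)
Definition trsign (F : finFieldType) (n : nat) (y : F) : int :=
  if abs_trace n y == 0 then 1 else -1.

Definition walsh (F : finFieldType) (n : nat) (f : F -> F) (b a : F) : int :=
  \sum_(x : F) trsign n (b * f x + a * x).

(* The component x |-> Tr(lambda f(x)) is bent: |W_f(lambda,a)| = 2^{n/2} for all a. *)
Definition bent_component (F : finFieldType) (n : nat) (f : F -> F) (lam : F) : bool :=
  [forall a : F, `|walsh n f lam a| == (2 ^ n./2)%:Z].

Definition num_bent (F : finFieldType) (n : nat) (f : F -> F) : nat :=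
  #|[set lam : F | (lam != 0) && bent_component n f lam]|.

Definition Ncoll (F : finFieldType) (f : F -> F) : nat :=
  #|[set p : F * F | f p.1 == f p.2]|.

Definition image_size (F : finFieldType) (f : F -> F) : nat :=
  #|f @: [set: F]|.

(* Main.v *)
Require Import Defs.
From HB Require Import structures.
From mathcomp Require Import all_boot all_order all_algebra all_field.
Import Order.TTheory GRing.Theory Num.Theory.
Local Open Scope ring_scope.
From mathcomp Require Import zify lra.

Section Tr.
Variables (F : finFieldType) (n : nat).
Hypothesis hF : #|F| = (2 ^ n)%N.

Lemma chF : (2 \in [pchar F])%N.
Proof. exact: card_finPcharP hF isT. Qed.

Lemma frobD i (x y : F) : (x + y) ^+ (2 ^ i) = x ^+ (2 ^ i) + y ^+ (2 ^ i).
Proof.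
elim: i => [|i IH]; first by rewrite expn0 !expr1.
by rewrite expnSr !exprM IH sqrrD (mulrn_pchar chF) addr0.
Qed.

Lemma trD (x y : F) : abs_trace n (x + y) = abs_trace n x + abs_trace n y.
Proof. by rewrite /abs_trace -big_split; apply: eq_bigr => i _; apply: frobD. Qed.

Lemma tr0 : abs_trace n (0 : F) = 0.
Proof. by rewrite /abs_trace big1 // => i _; rewrite expr0n expn_eq0. Qed.

Lemma tr_sq (x : F) : abs_trace n x ^+ 2 = abs_trace n x.
Proof.
have -> : abs_trace n x ^+ 2 = pFrobenius_aut chF (abs_trace n x) by rewrite pFrobenius_autE.
rewrite /abs_trace rmorph_sum /=.
under eq_bigr do rewrite pFrobenius_autE -exprM -expnSr.
move: hF; case: n => [|m hm]; first by rewrite !big_ord0.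
rewrite big_ord_recr big_ord_recl /= -hm expf_card expn0 expr1 addrC.
congr (_ + _); apply: eq_bigr => i _; done.
Qed.

Lemma tr01 (x : F) : abs_trace n x = 0 \/ abs_trace n x = 1.
Proof.
have : abs_trace n x * (abs_trace n x - 1) = 0 by rewrite mulrBr mulr1 -expr2 tr_sq subrr.
move/eqP; rewrite mulf_eq0 subr_eq0 => /orP[]/eqP; auto.
Qed.

Lemma trsignD (x y : F) : trsign n (x + y) = trsign n x * trsign n y.
Proof.
rewrite /trsign trD; case: (tr01 x) => ->; case: (tr01 y) => ->;
 rewrite ?addr0 ?add0r ?eqxx ?oner_eq0 ?(addrr_pchar2 chF) ?eqxx /= ?mulr1 ?mul1r ?mulrNN //.
Qed.

Lemma trsign0 : trsign n (0 : F) = 1.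
Proof. by rewrite /trsign tr0 eqxx. Qed.

Lemma trsign_pm (x : F) : trsign n x = 1 \/ trsign n x = -1.
Proof. rewrite /trsign; case: ifP; auto. Qed.

Definition S := \sum_(b : F) trsign n b.

Lemma sum_mul (c : F) : c != 0 -> \sum_(b : F) trsign n (b * c) = S.
Proof. move=> cnz; by rewrite /S [RHS](reindex_inj (mulIf cnz)). Qed.

Lemma S_shift (y : F) : S * trsign n y = S.
Proof.
rewrite /S big_distrl /=.
under eq_bigr do rewrite -trsignD.
by rewrite [RHS](reindex_inj (addIr y)).
Qed.


Lemma S0 : (exists y : F, trsign n y = -1) -> S = 0.
Proof. case=> y hy; have := S_shift y; rewrite hy mulrN1 => h. lia. Qed.

Lemma sum_c (c : F) : S = 0 -> \sum_(b : F) trsign n (b * c) = if c == 0 then (2^n)%:Z else 0.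
Proof.
move=> hS; case: eqP => [->|/eqP cnz]; last by rewrite sum_mul.
under eq_bigr do rewrite mulr0 trsign0.
by rewrite sumr_const -hF natz.
Qed.

Lemma sumW2 (f : F -> F) : S = 0 ->
  \sum_(b : F) walsh n f b 0 ^+ 2 = \sum_(x : F) \sum_(y : F) (if f x == f y then (2^n)%:Z else 0).
Proof.
move=> hS.
transitivity (\sum_(b : F) \sum_(x : F) \sum_(y : F) trsign n (b * (f x + f y))).
  apply: eq_bigr => b _; rewrite /walsh expr2 big_distrl; apply: eq_bigr => x _.
  rewrite big_distrr; apply: eq_bigr => y _; by rewrite !mul0r !addr0 mulrDr trsignD.
rewrite exchange_big; apply: eq_bigr => x _; rewrite exchange_big; apply: eq_bigr => y _.
by rewrite sum_c // addr_eq0 (oppr_pchar2 chF).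
Qed.

End Tr.

Lemma Ncoll_sum (F : finFieldType) (f : F -> F) :
  Ncoll f = (\sum_(x : F) \sum_(y : F) (f x == f y : nat))%N.
Proof.
rewrite /Ncoll -sum1_card [RHS]pair_big /= big_mkcond; apply: eq_bigr => -[x y] _.
by rewrite inE /=; case: eqP.
Qed.

Lemma sum_if_int (F : finFieldType) (f : F -> F) (c : int) :
  \sum_(x : F) \sum_(y : F) (if f x == f y then c else 0) = c * (Ncoll f)%:R.
Proof.
rewrite Ncoll_sum natr_sum mulr_sumr; apply: eq_bigr => x _.
rewrite natr_sum mulr_sumr; apply: eq_bigr => y _.
by case: eqP => _; rewrite ?mulr1 ?mulr0.
Qed.

Lemma sum_eq1 (T : finType) (a : T) : (\sum_(y : T) (a == y : nat))%N = 1%N.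
Proof. by rewrite (bigD1 a) //= eqxx big1 // => y hy; rewrite eq_sym (negbTE hy). Qed.

Lemma sum_sq_le (I : finType) (d : I -> nat) : (\sum_i d i ^ 2 <= (\sum_i d i) ^ 2)%N.
Proof.
rewrite -mulnn big_distrl leq_sum // => i _.
by rewrite -mulnn leq_mul2l (bigD1 i) //= leq_addr orbT.
Qed.

Lemma comb (F : finFieldType) (f : F -> F) :
  [/\ (image_size f <= #|F|)%N, (#|F| <= Ncoll f)%N &
   (Ncoll f <= (#|F| - image_size f) ^ 2 + (#|F| - image_size f) + #|F|)%N].
Proof.
pose s y := (\sum_(x : F) (f x == y : nat))%N.
have L1 : (\sum_(y : F) s y)%N = #|F|.
  rewrite /s exchange_big /=.
  under eq_bigr do rewrite sum_eq1.
  by rewrite sum1_card.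
have L2 : Ncoll f = (\sum_(y : F) s y ^ 2)%N.
  rewrite Ncoll_sum.
  transitivity (\sum_(y : F) \sum_(x : F) \sum_(x' : F) ((f x == y) * (f x' == y)))%N.
    symmetry; rewrite exchange_big; apply: eq_bigr => x _; rewrite exchange_big.
    apply: eq_bigr => x' _.
    rewrite (bigD1 (f x)) //= eqxx mul1n big1 => [|y hy]; first by rewrite addn0 eq_sym.
    by rewrite eq_sym (negbTE hy).
  apply: eq_bigr => y _; rewrite /s -mulnn big_distrl; apply: eq_bigr => x _.
  by rewrite big_distrr.
have L3 : image_size f = (\sum_(y : F) (0 < s y)%N)%N.
  rewrite /image_size -sum1_card big_mkcond; apply: eq_bigr => y _.
  have -> : (y \in f @: setT) = (0 < s y)%N.
    apply/imsetP/idP.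
      by case=> x _ ->; rewrite /s (bigD1 x) //= eqxx.
    move=> pos; case: (pickP (fun x => f x == y)) => [x /eqP hx|h].
      by exists x.
    by move: pos; rewrite /s big1 // => x _; rewrite h.
  by case: (0 < s y)%N.
pose d y := (s y).-1.
have E1 : #|F| = (\sum_y d y + image_size f)%N.
  rewrite L3 -big_split -L1; apply: eq_bigr => y _; rewrite /d; case: (s y) => [|k] //=; by rewrite addn1.
have E2 : Ncoll f = (\sum_y d y ^ 2 + 2 * \sum_y d y + image_size f)%N.
  rewrite L3 L2 big_distrr -!big_split; apply: eq_bigr => y _; rewrite /d.
  case: (s y) => [|k] //=. 
  lia.
have := @sum_sq_le F d.
move: E1 E2; set K := (\sum_y d y)%N; set D := (\sum_y d y ^ 2)%N.
move=> E1 E2 hD.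
have hK : (#|F| - image_size f = K)%N by lia.
rewrite hK; split; [lia|lia|].
rewrite E2; nia.
Qed.

Theorem theorem7p4 (R : rcfType) (F : finFieldType) (n t : nat) (f : F -> F) :
  ~~ odd n -> #|F| = (2 ^ n)%N -> num_bent n f = t ->
  (t + 2 ^ n <= Ncoll f)%N /\
  ((image_size f)%:R : R) <= (2 ^ n)%:R - (Num.sqrt (4 * t%:R + 1) - 1) / 2.
Proof.
move=> hev hF ht.
have hn2 : n = (n./2 + n./2)%N.
  by move: (odd_double_half n); rewrite (negbTE hev) add0n -addnn => ->.
have n0 : (0 < n)%N.
  case: n hF hn2 {hev ht} => [|m] // hF _.
  by have := card_finNzRing_gt1 F; rewrite hF.
have [Hs Hc Hu] := @comb F f; rewrite hF in Hs Hc Hu.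
set B := [set lam : F | (lam != 0) && bent_component n f lam].
have hBt : #|B| = t by [].
have part1 : (t + 2 ^ n <= Ncoll f)%N.
  case: (pickP (fun y : F => trsign n y == -1)) => [y /eqP hy | hall].
  - have hS := @S0 F n hF (ex_intro _ y hy).
    have key := @sumW2 F n hF f hS; rewrite sum_if_int in key.
    pose g (b : F) : int := (b == 0)%:R * ((2 ^ n)%:Z ^+ 2) + (b \in B)%:R * (2 ^ n)%:Z.
    have hle : \sum_(b : F) g b <= \sum_(b : F) walsh n f b 0 ^+ 2.
      apply: ler_sum => b _; rewrite /g.
      case: (eqVneq b 0) => [->|bnz].
        have -> : (0 : F) \in B = false by rewrite inE eqxx.
        have -> : walsh n f 0 0 = (2 ^ n)%:Z.
          rewrite /walsh; under eq_bigr do rewrite !mul0r addr0 trsign0.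
          by rewrite sumr_const -hF natz.
        by rewrite /= mul0r addr0 mul1r.
      case hb : (b \in B).
        move: hb; rewrite inE bnz /= /bent_component => /forallP /(_ 0) /eqP hw.
        rewrite mul0r add0r mul1r -(real_normK (num_real _)) hw.
        by rewrite expr2 -PoszM -expnD -hn2.
      by rewrite mul0r add0r mul0r sqr_ge0.
    have hg : \sum_(b : F) g b = (2 ^ n)%:Z ^+ 2 + t%:R * (2 ^ n)%:Z.
      rewrite /g big_split /= -!mulr_suml.
      have h1 : \sum_(b : F) ((b == 0 : nat)%:R : int) = 1.
        rewrite -natr_sum (eq_bigr (fun b : F => (0 == b : nat))) ?sum_eq1 // => b _; by rewrite eq_sym.
      have h2 : \sum_(b : F) ((b \in B : nat)%:R : int) = t%:R.
        by rewrite -natr_sum -hBt -sum1_card [in RHS]big_mkcond /=; congr (_ %:R); apply: eq_bigr => b _; case: (b \in B).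
      by rewrite h1 h2 mul1r.
    rewrite hg key in hle.
    have P0 : (0 < 2 ^ n)%N by rewrite expn_gt0.
    move: hle; set P := (2 ^ n)%N => hle.
    have : (P * P + t * P <= P * Ncoll f)%N.
      by move: hle; rewrite expr2 !natz -!PoszM -PoszD lez_nat.
    nia.
  - have all1 : forall z : F, trsign n z = 1.
      move=> z; case: (@trsign_pm F n z) => // h; move: (hall z); by rewrite /= h eqxx.
    have t0 : t = 0%N.
      rewrite -hBt; apply/eqP; rewrite cards_eq0; apply/eqP/setP => b.
      rewrite inE in_set0; apply/negbTE; apply/negP => /andP[_ /forallP /(_ 0) /eqP hw].
      have : walsh n f b 0 = (2 ^ n)%:Z.
        rewrite /walsh; under eq_bigr do rewrite all1.
        by rewrite sumr_const -hF natz.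
      move=> hw2; rewrite hw2 /= in hw; move: hw => /eqP.
      rewrite /= eqz_nat eqn_exp2l // => /eqP h; lia.
    by rewrite t0.
split=> //.
pose k := (2 ^ n - image_size f)%N.
have hk : (t <= k ^ 2 + k)%N by rewrite /k; lia.
have e : ((2 ^ n)%:R : R) = (image_size f)%:R + k%:R by rewrite -natrD /k subnKC.
have hs : Num.sqrt (4 * t%:R + 1 : R) <= 2 * k%:R + 1.
  have hn : ((4 * t + 1)%N%:R : R) <= ((2 * k + 1) ^ 2)%N%:R by rewrite ler_nat; nia.
  move: hn; rewrite natrD natrM natrX natrD natrM => hn.
  rewrite -(ler_sqrt _ (sqr_ge0 _)) in hn.
  rewrite sqrtr_sqr ger0_norm in hn; first exact: hn.
  have := ler0n R k; lra.
rewrite e; lra.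
Qed.
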